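(* Let $d\ge 2$ be an integer, $F\in(0,1]$ and $k\in(0,1)$. For each integer $n\ge 1$ let $C_n$ be $\sum_s\frac{4\lambda^+_s\lambda^-_s}{\lambda^+_s+\lambda^-_s}$ computed from the eigenvalues of the $nd$-qubit depolarized GHZ state with fidelity $k^{n-1}F$ (terms with $\lambda^+_s+\lambda^-_s=0$ taken to be $0$). Then $$\lim_{n\to\infty} d\,(1-C_n)\,n^2=0.$$
   Context: The $N$-qubit depolarized GHZ state with fidelity $G\in[0,1]$ is $G|\mathrm{GHZ}_N\rangle\langle\mathrm{GHZ}_N|+\frac{1-G}{2^N-1}(I-|\mathrm{GHZ}_N\rangle\langle\mathrm{GHZ}_N|)$ with $|\mathrm{GHZ}_N\rangle=(|0\cdots0\rangle+|1\cdots1\rangle)/\sqrt2$. It is diagonal in the GHZ basis $|G^\pm_s\rangle=(|s\rangle\pm|\bar s\rangle)/\sqrt2$, where $s$ ranges over one representative of each pair $\{s,\bar s\}$ of complementary bit strings of length $N$, with eigenvalues $\lambda^\pm_s$. The quantity $d(1-C_n)n^2$ is the quantum Fisher information for estimating the normalized average $\frac{1}{\sqrt d}\sum_i x_i$ of phases encoded by $\exp[-i\sum_i x_iH_i]$, $H_i=\frac12\sum_{k}\sigma_z^{(i,k)}$ on the $n$ qubits of node $i$. *)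

(* Defs.v *)
From HB Require Import structures.
From mathcomp Require Import all_boot all_order all_algebra.
From mathcomp Require Import all_classical all_reals all_analysis.
Set Implicit Arguments. Unset Strict Implicit. Unset Printing Implicit Defensive.
Import Order.TTheory GRing.Theory Num.Theory.
Local Open Scope ring_scope.

(* Computational basis of N qubits: bit strings of length N. *)
Definition bits (N : nat) := {ffun 'I_N -> bool}.

Section GHZ.
Variables (R : realType) (N : nat).

Definition zeros : bits N := [ffun => false].
Definition ones : bits N := [ffun => true].
Definition compl (s : bits N) : bits N := [ffun i => ~~ s i].

Definition ghz (x : bits N) : R :=
  ((x == zeros)%:R + (x == ones)%:R) / Num.sqrt 2.

(* depolarized GHZ state with fidelity G, as a matrix kernel on bits N:
   G |GHZ><GHZ| + (1-G)/(2^N-1) (I - |GHZ><GHZ|) *)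
Definition depol_ghz (G : R) (x y : bits N) : R :=
  G * (ghz x * ghz y)
  + (1 - G) / ((2 ^ N)%:R - 1) * ((x == y)%:R - ghz x * ghz y).

(* GHZ basis vector |G^{+/-}_s> = (|s> +/- |s bar>)/sqrt 2;
   sgn = true for +, false for - *)
Definition ghz_basis (sgn : bool) (s : bits N) (x : bits N) : R :=
  ((x == s)%:R + (if sgn then 1 else -1) * (x == compl s)%:R) / Num.sqrt 2.

(* eigenvalue lambda^{+/-}_s = <G^{+/-}_s| rho |G^{+/-}_s> (rho is diagonal
   in the GHZ basis) *)
Definition ghz_eig (G : R) (sgn : bool) (s : bits N) : R :=
  \sum_x \sum_y ghz_basis sgn s x * depol_ghz G x y * ghz_basis sgn s y.

(* one representative of each pair {s, s bar}: the strings whose first bit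
   is 0 *)
Definition ghz_rep (s : bits N) : bool :=
  [forall i : 'I_N, (val i == 0%N) ==> ~~ s i].

Definition Cterm (a b : R) : R :=
  if a + b == 0 then 0 else 4 * a * b / (a + b).

Definition C_ghz (G : R) : R :=
  \sum_(s : bits N | ghz_rep s) Cterm (ghz_eig G true s) (ghz_eig G false s).

End GHZ.

Definition C_seq (R : realType) (d : nat) (F k : R) (n : nat) : R :=
  C_ghz (n * d) (k ^+ n.-1 * F).

(* Main.v *)
Require Import Defs.
From HB Require Import structures.
From mathcomp Require Import all_boot all_order all_algebra.
From mathcomp Require Import all_classical all_reals all_analysis.
From mathcomp Require Import ring lra.
Import Order.TTheory GRing.Theory Num.Theory.
Set Implicit Arguments. Unset Strict Implicit.
Local Open Scope classical_set_scope.
Local Open Scope ring_scope.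

Section Alg.
Variables (R : realType) (N : nat).

Definition eps (b : bool) : R := if b then 1 else -1.
Definition uu : R := (Num.sqrt (2:R))^-1.

Lemma uu2 : uu ^+ 2 = 2^-1.
Proof. by rewrite /uu exprVn sqr_sqrtr. Qed.

Lemma eps2 b : eps b * eps b = 1.
Proof. by case: b; rewrite /eps; ring. Qed.

Lemma h1 (a b c t e : R) : (b + e*a)/t*c = b*(c/t) + a*(e*c/t).
Proof. ring. Qed.

Lemma sum_ind (f : bits N -> R) a : \sum_x (x == a)%:R * f x = f a.
Proof.
rewrite (bigD1 a) //= eqxx /= mul1r big1 ?addr0 // => x /negbTE ->; by rewrite mul0r.
Qed.

Lemma sum_basis sgn s (h : bits N -> R) :
  \sum_x ghz_basis R sgn s x * h x = (h s + eps sgn * h (compl s)) * uu.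
Proof.
rewrite /ghz_basis.
transitivity (\sum_x ((x == s)%:R * (h x * uu)
   + (x == compl s)%:R * (eps sgn * h x * uu))).
  by apply: eq_bigr => x _; rewrite /uu /eps; apply: h1.
by rewrite big_split /= !sum_ind; ring.
Qed.

Lemma eig_gen G sgn (s : bits N) : ghz_eig G sgn s =
  (depol_ghz G s s + eps sgn * depol_ghz G s (compl s)
   + eps sgn * depol_ghz G (compl s) s
   + eps sgn * eps sgn * depol_ghz G (compl s) (compl s)) * uu ^+ 2.
Proof.
rewrite /ghz_eig.
transitivity (\sum_x ghz_basis R sgn s x *
   ((depol_ghz G x s + eps sgn * depol_ghz G x (compl s)) * uu)).
  apply: eq_bigr => x _; rewrite -sum_basis mulr_sumr.
  by apply: eq_bigr => y _; ring.
rewrite sum_basis; ring.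
Qed.

Definition gam (x : bits N) : R := (x == zeros N)%:R + (x == ones N)%:R.
Definition cc (G : R) : R := (1 - G) / ((2 ^ N)%:R - 1).

Lemma depolE G x y : depol_ghz G x y =
  (G - cc G) * uu ^+ 2 * gam x * gam y + cc G * (x == y)%:R.
Proof. rewrite /depol_ghz /ghz /cc /gam /uu; ring. Qed.

Lemma compl_neq (s : bits N) : (0 < N)%N -> (s == compl s) = false.
Proof.
move=> hN; apply/negbTE/eqP => /ffunP /(_ (Ordinal hN)).
by rewrite ffunE; case: (s _).
Qed.

Lemma eig_formula G sgn (s : bits N) : (0 < N)%N -> ghz_eig G sgn s =
  (G - cc G) / 4 * (gam s + eps sgn * gam (compl s)) ^+ 2 + cc G.
Proof.
move=> hN; rewrite eig_gen !depolE uu2 !eqxx compl_neq // eq_sym compl_neq //.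
have t1 : (true%:R : R) = 1 by [].
have f0 : (false%:R : R) = 0 by [].
by case: sgn; rewrite /eps t1 f0; field; rewrite ?pnatr_eq0.
Qed.


Section Conc.
Hypothesis hN : (0 < N)%N.
Let i0 : 'I_N := Ordinal hN.

Lemma zeros_ones : (zeros N == ones N) = false.
Proof. by apply/negbTE/eqP => /ffunP /(_ i0); rewrite !ffunE. Qed.

Lemma compl_zeros : compl (zeros N) = ones N.
Proof. by apply/ffunP => i; rewrite !ffunE. Qed.

Lemma complK (s : bits N) : compl (compl s) = s.
Proof. by apply/ffunP => i; rewrite !ffunE negbK. Qed.

Lemma compl_inj : injective (@compl N).
Proof. exact: can_inj complK. Qed.

Lemma repE (s : bits N) : ghz_rep s = ~~ s i0.
Proof.
apply/forallP/idP => [/(_ i0)|h i]; first by rewrite eqxx.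
by apply/implyP => /eqP hi; have -> : i = i0 by apply: val_inj.
Qed.

Lemma gam_zeros : gam (zeros N) = 1.
Proof. by rewrite /gam eqxx zeros_ones /= addr0. Qed.

Lemma gam_ones : gam (ones N) = 1.
Proof. by rewrite /gam eqxx eq_sym zeros_ones /= add0r. Qed.

Lemma gam_other (s : bits N) : ghz_rep s -> s != zeros N ->
  gam s = 0 /\ gam (compl s) = 0.
Proof.
rewrite repE => hs hz; rewrite /gam.
have h1 : (s == ones N) = false.
  by apply/negbTE/eqP => hso; move: hs; rewrite hso ffunE.
have h2 : (compl s == zeros N) = false.
  by apply/negbTE/eqP => hso; move: hs; rewrite -[s]complK hso !ffunE.
have h3 : (compl s == ones N) = false.
  apply/negbTE/eqP => hso; move/eqP: hz; apply.
  by rewrite -[s]complK hso; apply/ffunP => i; rewrite !ffunE.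
by rewrite (negbTE hz) h1 h2 h3 /= addr0.
Qed.

Lemma eig_zeros_p (G : R) : ghz_eig G true (zeros N) = G.
Proof.
rewrite eig_formula // compl_zeros gam_zeros gam_ones /eps.
field; by rewrite ?pnatr_eq0.
Qed.

Lemma eig_zeros_m (G : R) : ghz_eig G false (zeros N) = cc G.
Proof.
rewrite eig_formula // compl_zeros gam_zeros gam_ones /eps.
by rewrite mulN1r subrr expr0n /= mulr0 add0r.
Qed.

Lemma eig_other (G : R) sgn (s : bits N) : ghz_rep s -> s != zeros N ->
  ghz_eig G sgn s = cc G.
Proof.
move=> h1 h2; rewrite eig_formula //; have [-> ->] := gam_other h1 h2.
by rewrite mulr0 addr0 expr0n /= mulr0 add0r.
Qed.

Lemma count_rep : (\sum_(s : bits N | ghz_rep s) (1 : R)) * 2 = (2 ^ N)%:R.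
Proof.
have hall : \sum_(s : bits N) (1 : R) = (2 ^ N)%:R.
  by rewrite sumr_const /bits card_ffun card_bool card_ord.
rewrite -hall [RHS](bigID (@ghz_rep N)) /= mulr_natr mulr2n; congr (_ + _).
rewrite (reindex_inj compl_inj) /=; apply: eq_bigl => s.
by rewrite !repE ffunE.
Qed.

Lemma Cterm_same (c : R) : Cterm c c = 2 * c.
Proof.
rewrite /Cterm; case: ifP => [/eqP h|/negbT h].
  lra.
field. exact: h.
Qed.

Lemma oneC (G : R) : 1 - C_ghz N G = G + cc G - Cterm G (cc G).
Proof.
rewrite /C_ghz (bigD1 (zeros N)) /=; last by rewrite repE ffunE.
rewrite eig_zeros_p eig_zeros_m.
have e1 : \sum_(s | ghz_rep s && (s != zeros N))
   Cterm (ghz_eig G true s) (ghz_eig G false s) =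
   \sum_(s | ghz_rep s && (s != zeros N)) (2 * cc G).
  by apply: eq_bigr => s /andP[h1 h2]; rewrite !eig_other // Cterm_same.
rewrite e1.
have e4 : \sum_(s | ghz_rep s && (s != zeros N)) (2 * cc G) =
   2 * cc G * \sum_(s | ghz_rep s && (s != zeros N)) (1 : R).
  by rewrite big_distrr; apply: eq_bigr => s _; exact: (esym (mulr1 _)).
rewrite e4.
have e2 := count_rep.
rewrite (bigD1 (zeros N)) /= in e2; last by rewrite repE ffunE.
have e3 : cc G * ((2 ^ N)%:R - 1) = 1 - G.
  rewrite /cc; field.
  have : (1 < 2 ^ N)%N by rewrite -{1}(expn0 2) ltn_exp2l.
  by rewrite subr_eq0 pnatr_eq1 => /gtn_eqF; rewrite eq_sym => ->.
rewrite -e2 in e3.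
move: e3; set S := \sum_(_ | _) _; move=> e3.
nra.
Qed.

End Conc.
End Alg.

Section Ana.
Variable R : realType.

Lemma nz_bound (z : R) n : 0 <= z -> z < 1 -> n%:R * z ^+ n <= (1 - z)^-1.
Proof.
move=> z0 z1.
have hs : (\sum_(i < n) z ^+ i) * (1 - z) = 1 - z ^+ n.
  have := subrX1 z n; move=> h.
  have -> : 1 - z ^+ n = - (z ^+ n - 1) by rewrite opprB.
  by rewrite h mulrC -mulNr opprB.
have h1 : n%:R * z ^+ n <= \sum_(i < n) z ^+ i.
  have -> : n%:R * z ^+ n = \sum_(i < n) z ^+ n.
    by rewrite sumr_const card_ord mulr_natl.
  apply: ler_sum => i _; apply: ler_wiXn2l => //; first exact: ltW.
  exact: ltnW.
apply: (le_trans h1); rewrite -[X in X <= _]mulr1 -[X in _ * X <= _](@mulfV _ (1 - z)); last first.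
  by rewrite subr_eq0 eq_sym lt_eqF.
rewrite mulrA hs -[X in _ <= X]mul1r ler_wpM2r //.
  by rewrite invr_ge0 subr_ge0 ltW.
by rewrite lerBlDr lerDl exprn_ge0.
Qed.

Lemma nz_cvg (z : R) : 0 <= z -> z < 1 ->
  ((fun n : nat => n%:R * z ^+ n) : R^nat) @ \oo --> 0.
Proof.
move=> z0 z1; set u := Num.sqrt z.
have u0 : 0 <= u by exact: sqrtr_ge0.
have u1 : u < 1 by rewrite /u -sqrtr1 ltr_sqrt.
have hz : forall n, z ^+ n = u ^+ n * u ^+ n.
  by move=> n; rewrite -exprMn -expr2 /u sqr_sqrtr.
have hu : (fun n => u ^+ n : R) @ \oo --> 0.
  by apply: cvg_expr; rewrite ger0_norm.
have hM : (fun n => (1 - u)^-1 * u ^+ n : R) @ \oo --> 0.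
  by rewrite -(mulr0 (1 - u)^-1); apply: cvgMl_tmp.
have h0 : (fun n => 0 * u ^+ n : R) @ \oo --> 0.
  by rewrite -[X in _ --> X](mulr0 0); apply: cvgMl_tmp.
apply: (squeeze_cvgr _ h0 hM).
near=> n; rewrite mul0r mulr_ge0 ?exprn_ge0 //= hz mulrA ler_wpM2r ?exprn_ge0 //.
exact: nz_bound.
Unshelve. all: end_near.
Qed.

Lemma n2z_cvg (z : R) : 0 <= z -> z < 1 ->
  ((fun n : nat => n%:R ^+ 2 * z ^+ n) : R^nat) @ \oo --> 0.
Proof.
move=> z0 z1; set u := Num.sqrt z.
have u0 : 0 <= u by exact: sqrtr_ge0.
have u1 : u < 1 by rewrite /u -sqrtr1 ltr_sqrt.
have hz : forall n, z ^+ n = u ^+ n * u ^+ n.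
  by move=> n; rewrite -exprMn -expr2 /u sqr_sqrtr.
have H := cvgM (nz_cvg u0 u1) (nz_cvg u0 u1); rewrite mulr0 in H.
have -> : (fun n : nat => n%:R ^+ 2 * z ^+ n) =
   ((fun n : nat => n%:R * u ^+ n) \* (fun n : nat => n%:R * u ^+ n)).
  by apply/funext => n /=; rewrite hz expr2; ring.
exact: H.
Qed.
End Ana.

Lemma boundC (R : realType) N (G : R) : (0 < N)%N -> 0 < G -> G <= 1 ->
  0 <= 1 - C_ghz N G <= G + 2 / (2 ^ N)%:R.
Proof.
move=> hN G0 G1; rewrite oneC //.
set P : R := (2 ^ N)%:R.
have hP : 2 <= P.
  rewrite /P (_ : (2:R) = (2 ^ 1)%:R) // ler_nat leq_pexp2l //.
set c := cc N G.
have e3 : c * (P - 1) = 1 - G.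
  rewrite /c /cc -/P; field.
  by rewrite subr_eq0; apply/negP => /eqP h; move: hP; rewrite /P h; lra.
have c0 : 0 <= c by nra.
have c1 : c <= 2 / P.
  by rewrite ler_pdivlMr; [nra | lra].
have Gc : 0 < G + c by lra.
rewrite /Cterm (gt_eqF Gc).
have q0 : 0 <= 4 * G * c / (G + c).
  by apply: divr_ge0; [nra | lra].
have q1 : 4 * G * c / (G + c) <= G + c.
  by rewrite ler_pdivrMr //; have := sqr_ge0 (G - c); rewrite expr2 => ?; nra.
apply/andP; split; lra.
Qed.

Unset Implicit Arguments.
Unset Strict Implicit.
Theorem mainTheorem5 (R : realType) (d : nat) (F k : R) :
  (2 <= d)%N -> 0 < F -> F <= 1 -> 0 < k -> k < 1 ->
  ((fun n : nat => d%:R * (1 - C_seq d F k n) * (n%:R) ^+ 2) : R^nat) @ \oo --> 0.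
Proof.
move=> hd F0 F1 k0 k1.
have hb1 := n2z_cvg (ltW k0) k1.
have h2a : (0 : R) <= 2^-1 by rewrite invr_ge0.
have h2b : (2^-1 : R) < 1 by rewrite invf_lt1 // ltr1n.
have hb2 := n2z_cvg h2a h2b.
have hb : (fun n : nat => d%:R / k * (n%:R ^+ 2 * k ^+ n)
    + 2 * d%:R * (n%:R ^+ 2 * (2^-1) ^+ n) : R) @ \oo --> 0.
  have H := cvgD (cvgMl_tmp (a:=d%:R / k) hb1) (cvgMl_tmp (a:=2 * d%:R) hb2).
  by rewrite !mulr0 addr0 in H; exact: H.
have h0 : (fun n : nat => 0 * (d%:R / k * (n%:R ^+ 2 * k ^+ n)
    + 2 * d%:R * (n%:R ^+ 2 * (2^-1) ^+ n)) : R) @ \oo --> 0.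
  by rewrite -[X in _ --> X](mulr0 0); apply: cvgMl_tmp.
apply: (squeeze_cvgr _ h0 hb).
near=> n.
have n1 : (1 <= n)%N by near: n; exact: nbhs_infty_ge.
rewrite mul0r /C_seq.
set G := k ^+ n.-1 * F.
have hN : (0 < n * d)%N by rewrite muln_gt0 n1 (leq_trans _ hd).
have kn : k ^+ n.-1 <= 1 by rewrite exprn_ile1 // ltW.
have G0 : 0 < G by rewrite /G mulr_gt0 // exprn_gt0.
have G1 : G <= 1.
  by rewrite /G -[1]mulr1 ler_pM // ?exprn_ge0 ?ltW.
have /andP[l u] := boundC hN G0 G1.
have hG : G <= k ^+ n / k.
  have kk : k ^+ n = k * k ^+ n.-1 by rewrite -exprS prednK.
  rewrite kk [k * _]mulrC mulfK ?gt_eqF // /G -[X in _ <= X]mulr1.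
  by rewrite ler_wpM2l // ?exprn_ge0 // ltW.
have h2 : 2 / (2 ^ (n * d))%:R <= 2 * (2^-1 : R) ^+ n.
  rewrite exprVn -natrX ler_wpM2l // lef_pV2 ?posrE ?ltr0n ?expn_gt0 //.
  by rewrite ler_nat leq_pexp2l // leq_pmulr // (leq_trans _ hd).
have hX : 1 - C_ghz (n * d) G <= k ^+ n / k + 2 * (2^-1) ^+ n by lra.
have E : d%:R / k * (n%:R ^+ 2 * k ^+ n) + 2 * d%:R * (n%:R ^+ 2 * (2^-1) ^+ n)
   = d%:R * (k ^+ n / k + 2 * (2^-1) ^+ n) * n%:R ^+ 2 :> R by ring.
rewrite E !mulr_ge0 ?exprn_ge0 //= ler_wpM2r ?exprn_ge0 // ler_wpM2l //.
Unshelve. all: end_near.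
Qed.
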